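(* Consider the damped Newton's method, i.e. SGD with momentum $\mu\in[0,1)$ and preconditioning matrix $\Lambda:=\lambda A^{-1}$ ($\lambda>0$), on linear regression with label noise in the limit $N\to\infty$. Let $g:=2(1-\mu)-\left(\frac{1-\mu}{1+\mu}+\frac1S\right)\lambda$, and assume $g\neq0$ and $gS\neq\lambda D$. Then the model fluctuation is $$\Sigma=\frac{\lambda\sigma^2}{gS-\lambda D}A^{-1}.$$
   Context: Data: $x_i\in\mathbb{R}^D$ i.i.d. $\mathcal N(0,A)$, $A$ symmetric positive definite; $y_i=\mathbf{u}^{\mathrm T}x_i+\epsilon_i$ with $\epsilon_i$ i.i.d., independent of the $x_i$, mean $0$, variance $\sigma^2$; loss $\frac1{2N}\sum_i(\mathbf{w}^{\mathrm T}x_i-y_i)^2$, Hessian $H=A$; batch size $S$. Update: $\mathbf{m}_t=\mu\mathbf{m}_{t-1}+\hat{\mathbf{g}}_t$, $\mathbf{w}_t=\mathbf{w}_{t-1}-\Lambda\mathbf{m}_t$. The fluctuation $\Sigma:=\lim_t\mathbb{E}[(\mathbf{w}_t-\mathbf{u})(\mathbf{w}_t-\mathbf{u})^{\mathrm T}]$ satisfies $(1-\mu)(\Lambda H\Sigma+\Sigma H\Lambda)-\frac{1+\mu^2}{1-\mu^2}\Lambda H\Sigma H\Lambda+\frac{\mu}{1-\mu^2}(\Lambda H\Lambda H\Sigma+\Sigma H\Lambda H\Lambda)=\Lambda C\Lambda$ with $C=\frac1S(A\Sigma A+\mathrm{Tr}[A\Sigma]A+\sigma^2A)$. *)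

(* Defs.v *)
From mathcomp Require Import all_boot all_order all_algebra.
Set Implicit Arguments. Unset Strict Implicit. Unset Printing Implicit Defensive.
Import Order.TTheory GRing.Theory Num.Theory.
Local Open Scope ring_scope.

Definition spd (R : realFieldType) (n : nat) (A : 'M[R]_n) : Prop :=
  A^T = A /\ forall v : 'cV[R]_n, v != 0 -> 0 < (v^T *m A *m v) 0 0.

Definition noise_cov (R : realFieldType) (n : nat) (S : nat) (sigma : R)
  (A Sigma : 'M[R]_n) : 'M[R]_n :=
  (S%:R)^-1 *: (A *m Sigma *m A + (\tr (A *m Sigma)) *: A + (sigma ^+ 2) *: A).

(* stationary fluctuation equation for SGD with momentum mu,
   preconditioner Lambda, Hessian H, gradient-noise covariance C *)
Definition fluctuation_eq (R : realFieldType) (n : nat) (mu : R)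
  (Lambda H C Sigma : 'M[R]_n) : Prop :=
  (1 - mu) *: (Lambda *m H *m Sigma + Sigma *m H *m Lambda)
  - ((1 + mu ^+ 2) / (1 - mu ^+ 2)) *: (Lambda *m H *m Sigma *m H *m Lambda)
  + (mu / (1 - mu ^+ 2)) *: (Lambda *m H *m Lambda *m H *m Sigma
                              + Sigma *m H *m Lambda *m H *m Lambda)
  = Lambda *m C *m Lambda.

(* Main.v *)
Require Import Defs.
From mathcomp Require Import all_boot all_order all_algebra.
From mathcomp Require Import ring lra.
Import Order.TTheory GRing.Theory Num.Theory.
Local Open Scope ring_scope.

Lemma spd_unit (R : realFieldType) (n : nat) (A : 'M[R]_n) : spd A -> A \in unitmx.
Proof.
move=> [sA pA]; rewrite unitmxE unitfE; apply/negP => /det0P [v v0 vA].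
have := pA v^T; rewrite trmx_eq0 => /(_ v0).
by rewrite trmxK -mulmxA -[A *m v^T]trmxK trmx_mul trmxK sA vA trmx0 mulmx0 mxE ltxx.
Qed.

Theorem proposition5 (R : realFieldType) (D S : nat) (A Sigma : 'M[R]_D)
    (mu lambda sigma : R) :
  spd A -> (0 < S)%N -> 0 <= mu -> mu < 1 -> 0 < lambda ->
  let g := 2 * (1 - mu) - ((1 - mu) / (1 + mu) + (S%:R)^-1) * lambda in
  g != 0 -> g * S%:R != lambda * D%:R ->
  fluctuation_eq mu (lambda *: invmx A) A (noise_cov S sigma A Sigma) Sigma ->
  Sigma = (lambda * sigma ^+ 2 / (g * S%:R - lambda * D%:R)) *: invmx A.
Proof.
move=> hA S0 mu0 mu1 l0 g g0 gD.
have uA := @spd_unit _ _ _ hA.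
rewrite /fluctuation_eq /noise_cov.
set L := lambda *: invmx A.
have LA : L *m A = lambda%:M by rewrite -scalemxAl mulVmx // scalemx1.
have AL : A *m L = lambda%:M by rewrite -scalemxAr mulmxV // scalemx1.
have LAX X : L *m (A *m X) = lambda *: X by rewrite mulmxA LA mul_scalar_mx.
have XAL (X : 'M[R]_D) : X *m A *m L = lambda *: X by rewrite -mulmxA AL mul_mx_scalar.
rewrite !LA !mul_scalar_mx -!scalemxAl !XAL.
rewrite mulVmx // mul1mx /L.
rewrite -!scalemxAr -!scalemxAl !mulmxDr !mulmxDl -!scalemxAr -!scalemxAl.
rewrite !mulmxA mulVmx // mul1mx -!mulmxA mulmxV // mulmx1 !mul1mx.
move=> E.
set t := \tr (A *m Sigma) in E.
have S0' : (S%:R : R) != 0 by rewrite pnatr_eq0 -lt0n.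
have m1 : 1 - mu ^+ 2 != 0 by rewrite subr_eq0 eq_sym; apply/negP => /eqP h; nra.
have m2 : 1 + mu != 0 by apply/negP => /eqP h; nra.
have l0' : lambda != 0 by rewrite gt_eqF.
have E2 : Sigma = (lambda * (t + sigma ^+ 2) / (g * S%:R)) *: invmx A.
  apply/matrixP => i j; move/matrixP: E => /(_ i j); rewrite !mxE.
  set s := Sigma i j; set a := invmx A i j => E.
  have key : lambda * g * s = lambda * lambda / S%:R * (t + sigma ^+ 2) * a.
    have -> : lambda * g * s = (1 - mu) * (lambda * s + lambda * s) -
      ((1 + mu ^+ 2) / (1 - mu ^+ 2)) * (lambda * (lambda * s)) +
      (mu / (1 - mu ^+ 2)) * (lambda * (lambda * s) + lambda * (lambda * s))
      - (S%:R)^-1 * lambda * lambda * s.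
      rewrite /g; field; by rewrite ?S0' ?m1 ?m2.
    rewrite E; field; by rewrite ?S0'.
  apply: (mulfI (mulf_neq0 l0' g0)); rewrite key; field.
  by rewrite S0' g0.
have ht : t = \tr (A *m Sigma) by [].
clearbody t.
rewrite E2 -scalemxAr mulmxV // mxtraceZ mxtrace1 in ht.
have gD' : g * S%:R - lambda * D%:R != 0 by rewrite subr_eq0.
have gS : g * S%:R != 0 by rewrite mulf_neq0.
have ht2 : t = lambda * sigma ^+ 2 * D%:R / (g * S%:R - lambda * D%:R).
  have h1 : t * (g * S%:R) - t * (lambda * D%:R) = lambda * sigma ^+ 2 * D%:R.
    rewrite {1}ht; field; by rewrite ?S0' ?g0.
  rewrite -h1; field; by rewrite ?gD'.
rewrite {1}E2; congr (_ *: _); rewrite ht2; field.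
by rewrite ?gD' ?S0' ?g0.
Qed.
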